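(* Let $k_1,\dots,k_r$ be pairwise coprime odd integers with $k_i\ge 3$ for all $i$, such that $q=2k_1k_2\cdots k_r+1$ is a prime power. Then there exists a $\left(\frac{q-1}{2},\{k_1,\dots,k_r\}\right)$-MOHS.
   Context: Let $G$ be an abelian group of odd order $2v+1\ge 7$. A half-set of $G$ is a subset $V\subseteq G\setminus\{0\}$ containing exactly one element of each pair $\{g,-g\}$, $g\ne 0$ (so $|V|=v$). A $(v,k)$ Heffter system on $V$ is a partition of $V$ into blocks of size $k$, each block having sum $0$ in $G$. Two Heffter systems on the same half-set are orthogonal if every block of one meets every block of the other in at most one element. A $(v,\{k_1,\dots,k_r\})$-MOHS is a set $\{\mathcal P_1,\dots,\mathcal P_r\}$ of pairwise orthogonal Heffter systems on a common half-set of some abelian group of order $2v+1$, where $\mathcal P_i$ is a $(v,k_i)$ Heffter system. *)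

(* Defs.v *)
From HB Require Import structures.
From mathcomp Require Import all_boot all_order all_algebra.
Set Implicit Arguments. Unset Strict Implicit. Unset Printing Implicit Defensive.
Import GRing.Theory.
Local Open Scope ring_scope.

Definition half_set (G : finZmodType) (V : {set G}) : Prop :=
  0 \notin V /\ forall g : G, g != 0 -> (g \in V) (+) (- g \in V).

Definition heffter_system (G : finZmodType) (V : {set G}) (k : nat)
    (P : {set {set G}}) : Prop :=
  partition P V /\
  forall B, B \in P -> #|B| = k /\ \sum_(x in B) x = 0.

Definition orthogonal_systems (G : finZmodType) (P Q : {set {set G}}) : Prop :=
  forall B C, B \in P -> C \in Q -> (#|B :&: C| <= 1)%N.

Definition MOHS (v r : nat) (k : 'I_r -> nat) : Prop :=
  exists G : finZmodType, #|G| = (2 * v + 1)%N /\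
  exists V : {set G}, half_set V /\
  exists P : 'I_r -> {set {set G}},
    (forall i, heffter_system V (k i) (P i)) /\
    (forall i j, i != j -> orthogonal_systems (P i) (P j)).

Definition prime_power (q : nat) : Prop :=
  exists p e : nat, prime p /\ (0 < e)%N /\ q = (p ^ e)%N.
Arguments MOHS : clear implicits.

(* Main.v *)
Require Import Defs.
From mathcomp Require Import all_boot all_order all_algebra all_field.
From mathcomp Require Import cyclic.
From mathcomp Require Import ring.
Set Implicit Arguments. Unset Strict Implicit. Unset Printing Implicit Defensive.
Import GRing.Theory.

Section Main.
Local Open Scope ring_scope.
Variable F : finFieldType.

Lemma unit_pow (x : F) : x != 0 -> x ^+ #|F|.-1 = 1.
Proof.
move=> x0; apply: (mulfI x0); rewrite mulr1 -exprS prednK ?expf_card //.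
by apply/card_gt0P; exists 0.
Qed.

Lemma prim_exists : exists w : F, (#|F|.-1).-primitive_root w.
Proof.
have hgt: (0 < #|F|.-1)%N.
  by rewrite -(cardC1 (0:F)); apply/card_gt0P; exists 1; rewrite !inE oner_eq0.
have /hasP[w _ Hw] : has (#|F|.-1).-primitive_root (enum (predC1 (0:F))).
  apply: has_prim_root => //; last by rewrite -cardE cardC1.
  - by apply/allP => x; rewrite mem_enum !inE => /unit_pow Hx; rewrite unity_rootE Hx eqxx.
  - exact: enum_uniq.
by exists w.
Qed.


Lemma mohs_field r (k : 'I_r -> nat) (v : nat) :
  v = (\prod_(i < r) k i)%N -> #|F| = (2 * v + 1)%N -> (1 + 1 : F) != 0 ->
  (forall i, odd (k i) /\ (3 <= k i)%N) ->
  (forall i j, i != j -> coprime (k i) (k j)) ->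
  exists V : {set F}, half_set V /\ exists P : 'I_r -> {set {set F}},
    (forall i, heffter_system V (k i) (P i)) /\
    (forall i j, i != j -> orthogonal_systems (P i) (P j)).
Proof.
move=> ev cF two0 hk hcop.
have vodd : odd v.
  rewrite ev; elim/big_ind: _ => //= [a b ha hb|i _]; first by rewrite oddM ha hb.
  exact (hk i).1.
have v0 : (0 < v)%N by rewrite odd_gt0.
have dk i : (k i %| v)%N by rewrite ev (bigD1 i) //= dvdn_mulr.
have n2v : #|F|.-1 = (2 * v)%N by rewrite cF addn1.
have [w pw] := prim_exists.
have m11 : (-1 : F) != 1 by rewrite eq_sym -addr_eq0.
pose V := [set x : F | x ^+ v == 1].
have V0 x : x \in V -> x != 0.
  rewrite inE; apply: contraTneq => ->.
  by rewrite expr0n eqn0Ngt v0 /= eq_sym oner_eq0.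
exists V; split.
  split.
    by apply/negP => /V0 /eqP.
  move=> g g0; set a := g ^+ v.
  have a2 : a * a = 1 by rewrite -exprD addnn -mul2n -n2v unit_pow.
  have na : (- g) ^+ v = - a by rewrite exprNn -signr_odd vodd expr1 mulN1r.
  rewrite !inE na -/a.
  have : (a - 1) * (a + 1) = a * a - 1 by ring.
  rewrite a2 subrr => /eqP; rewrite mulf_eq0 subr_eq0 addr_eq0 => /orP[]/eqP->.
    by rewrite eqxx (negbTE m11).
  by rewrite opprK eqxx (negbTE m11).
pose P i := preim_partition (fun x : F => x ^+ k i) V.
exists P; split.
  move=> i; split; first exact: preim_partitionP.
  move=> B /imsetP[x xV ->].
  set ki := k i.
  have ki1 : (1 < ki)%N by have [_ h] := hk i; apply: leq_trans h.
  have dki : (ki %| #|F|.-1)%N by rewrite n2v; apply: dvdn_mull; apply: dk.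
  set z := w ^+ (#|F|.-1 %/ ki).
  have pz : ki.-primitive_root z := dvdn_prim_root pw dki.
  have x0 := V0 _ xV.
  have zv : z ^+ v = 1.
    by rewrite -(divnK (dk i)) mulnC exprM (prim_expr_order pz) expr1n.
  have eqB : [set y in V | x ^+ ki == y ^+ ki] = [set x * z ^+ (j : 'I_ki) | j : 'I_ki].
    apply/setP => y; rewrite !inE; apply/andP/imsetP.
      case=> yV /eqP e.
      have : (y / x) ^+ ki = 1 by rewrite expr_div_n -e divff // expf_neq0.
      move/(prim_rootP pz) => [j hj]; exists j => //.
      by rewrite -hj mulrC divfK.
    case=> j _ ->; move: xV; rewrite inE => /eqP xv; split.
      by rewrite exprMn xv mul1r -exprM mulnC exprM zv expr1n.
    by rewrite exprMn -exprM mulnC exprM (prim_expr_order pz) expr1n mulr1.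
  have inj : injective (fun j : 'I_ki => x * z ^+ j).
    move=> j1 j2 /(mulfI x0) /eqP; rewrite (eq_prim_root_expr pz).
    rewrite !modn_small ?ltn_ord // => /eqP; exact: val_inj.
  have z1 : z != 1.
    have := eq_prim_root_expr pz 1 0; rewrite expr1 expr0 => ->.
    by rewrite mod0n modn_small.
  rewrite eqB; split; first by rewrite card_imset // card_ord.
  rewrite big_imset /=; last by move=> a b _ _; apply: inj.
  rewrite -mulr_sumr.
  have : (z - 1) * \sum_(j < ki) z ^+ j = 0 by rewrite -subrX1 (prim_expr_order pz) subrr.
  move/eqP; rewrite mulf_eq0 subr_eq0 (negbTE z1) /= => /eqP s0.
  by rewrite s0 mulr0.
move=> i j ij B C /imsetP[x xV ->] /imsetP[y yV ->].
apply/card_le1_eqP => a b.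
rewrite !inE => /andP[/andP[aV /eqP ea] /andP[_ /eqP fa]] /andP[/andP[bV /eqP eb] /andP[_ /eqP fb]].
have a0 : a != 0 by apply: V0; rewrite inE.
have b0 : b != 0 by apply: V0; rewrite inE.
have abi : a ^+ k i = b ^+ k i by rewrite -ea eb.
have abj : a ^+ k j = b ^+ k j by rewrite -fa fb.
have ki0 : (0 < k i)%N by have [_ h] := hk i; apply: leq_trans h.
have [c _ dd] := Bezoutl (k j) ki0.
move: dd; rewrite (eqP (hcop _ _ ij)) => dd.
have : a ^+ (1 + c * k j) = b ^+ (1 + c * k j).
  by rewrite -(divnK dd) (mulnC _ (k i)) !exprM abi.
rewrite !exprD !expr1 mulnC !exprM abj => /(mulIf (expf_neq0 _ (expf_neq0 _ b0))).
by move=> ->.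
Qed.

End Main.


Theorem theorem1p13 (r : nat) (k : 'I_r -> nat) :
  (0 < r)%N ->
  (forall i, odd (k i) /\ (3 <= k i)%N) ->
  (forall i j, i != j -> coprime (k i) (k j)) ->
  prime_power (2 * \prod_(i < r) k i + 1) ->
  MOHS ((2 * \prod_(i < r) k i + 1 - 1) %/ 2) r k.
Proof.
move=> r0 hk hcop [p [e [pp [e0 hq]]]].
set v := (\prod_(i < r) k i)%N in hq *.
have [F0 chF cF] := pPrimePowerField pp e0.
rewrite (_ : ((2 * v + 1 - 1) %/ 2 = v)%N); last by rewrite addnK mulKn.
have cF' : #|F0| = (2 * v + 1)%N by rewrite cF hq.
have two : ((1 + 1 : F0) != 0)%R.
  apply/negP => h.
  have p2 : (p %| 2)%N by rewrite (dvdn_pcharf chF); exact: h.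
  have : (p %| 1)%N.
    have : (p %| 2 * v + 1)%N by rewrite hq dvdn_exp.
    by rewrite dvdn_addr // dvdn_mulr.
  by rewrite dvdn1 => /eqP p1; rewrite p1 in pp.
have [V [hV [P [hP hO]]]] := mohs_field (erefl v) cF' two hk hcop.
exists (F0 : finZmodType); split; first exact: cF'.
by exists V; split; last by exists P.
Qed.
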